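(* Let $A\ge1$ be an integer, $N=2A$, and let $\mathbf{m}=(m_0,\dots,m_N)^\top$ with $m_A=N$ and $m_i=0$ for $i\ne A$; let $\mathbf{M}=\mathrm{diag}(m_0,\dots,m_N)$. Let $\mathbf{Q}_N$ be the tridiagonal matrix with $(\mathbf{Q}_N)_{kk}=-N$, $(\mathbf{Q}_N)_{k+1,k}=N-k$, $(\mathbf{Q}_N)_{k-1,k}=k$ (indices $0,\dots,N$) and zeros elsewhere. For $\mu\ge0$ let $\overline{m}(\mu)$ be the dominant (largest) eigenvalue of $\mathbf{M}+\mu\mathbf{Q}_N$ and $\overline{r}(\mu)=\overline{m}(\mu)/N$. Then for each fixed $\mu\ge0$, $$\lim_{A\to\infty}\overline{r}(\mu)=\sqrt{\mu^2+1}-\mu.$$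
   Context: $\overline{m}(\mu)$ equals the mean fitness $\mathbf{m}\cdot\mathbf{p}$ of the positive normalized eigenvector $\mathbf{p}$ of $\mathbf{M}+\mu\mathbf{Q}_N$ (Crow–Kimura quasispecies model with permutation invariant fitness landscape). *)

(* Defs.v *)
From HB Require Import structures.
From mathcomp Require Import all_boot all_order all_algebra.
From mathcomp Require Import all_classical all_reals all_analysis.
Set Implicit Arguments. Unset Strict Implicit. Unset Printing Implicit Defensive.
Import Order.TTheory GRing.Theory Num.Theory.
Local Open Scope ring_scope.
Local Open Scope classical_set_scope.

Definition NN (A : nat) : nat := (2 * A)%N.

Definition fitness (R : realType) (A : nat) : 'rV[R]_((NN A).+1) :=
  \row_(i < (NN A).+1) (if val i == A then (NN A)%:R else 0).

Definition Mmat (R : realType) (A : nat) : 'M[R]_((NN A).+1) :=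
  diag_mx (fitness R A).

Definition Qmat (R : realType) (N : nat) : 'M[R]_N.+1 :=
  \matrix_(i < N.+1, j < N.+1)
    if val i == val j then - (N%:R)
    else if val i == (val j).+1 then (N - val j)%:R
    else if (val i).+1 == val j then (val j)%:R
    else 0.

(* Dominant (largest) eigenvalue of a real square matrix:
   the supremum (= maximum, the spectrum being finite) of its eigenvalues. *)
Definition dominant_eigenvalue (R : realType) (n : nat) (B : 'M[R]_n.+1) : R :=
  sup [set l : R | eigenvalue B l].

Definition mbar (R : realType) (A : nat) (mu : R) : R :=
  dominant_eigenvalue (Mmat R A + mu *: Qmat R (NN A)).

Definition rbar (R : realType) (A : nat) (mu : R) : R :=
  mbar A mu / (NN A)%:R.

(* Main.v *)
Require Import Defs.
From HB Require Import structures.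
From mathcomp Require Import all_boot all_order all_algebra.
From mathcomp Require Import all_classical all_reals all_analysis.
From mathcomp Require Import zify ring lra.
Import Order.TTheory GRing.Theory Num.Theory.
Import numFieldNormedType.Exports.
Set Implicit Arguments. Unset Strict Implicit. Unset Printing Implicit Defensive.
Local Open Scope ring_scope.
Local Open Scope classical_set_scope.

Section Tri.
Variable R : realFieldType.

Definition tri n (b a c : nat -> R) : 'M[R]_n.+1 :=
  \matrix_(i, j) (if val i == val j then b (val j)
                  else if val i == (val j).+1 then a (val j)
                  else if (val i).+1 == val j then c (val j) else 0).

Lemma sum_if_eq (m t : nat) (g : nat -> R) :
  \sum_(j < m) (if val j == t then g (val j) else 0) = if (t < m)%N then g t else 0.
Proof.
elim: m => [|m IH]; first by rewrite big_ord0.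
rewrite big_ord_recr /= IH.
case: (ltngtP t m) => [lt|gt|->].
- rewrite (ltn_trans lt (ltnSn m)); have [e|_] := eqVneq m t; first lia.
  by rewrite addr0.
- have [e|_] := eqVneq m t; first lia.
  have -> : (t < m.+1)%N = false by lia.
  by rewrite addr0.
- by rewrite ltnSn add0r.
Qed.

Lemma split_row (i j : nat) (X Y Z : R) :
  (if i == j then X else if i == j.+1 then Y else if i.+1 == j then Z else 0) =
  (if j == i then X else 0) + (if j == i.-1 then (if (0 < i)%N then Y else 0) else 0)
  + (if j == i.+1 then Z else 0).
Proof.
have [<-|n1] := eqVneq i j.
  rewrite ?eqxx.
  have -> : (i == i.+1) = false by apply/eqP; lia.
  case: i => [|i] /=; first by rewrite !addr0.
  have -> : (i.+1 == i) = false by apply/eqP; lia.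
  by rewrite !addr0.
have [e2|n2] := eqVneq i j.+1.
  have -> : (j == i.-1) = true by apply/eqP; lia.
  have -> : (0 < i)%N = true by lia.
  have -> : (j == i.+1) = false by apply/eqP; lia.
  by rewrite add0r addr0.
have -> : (j == i.-1) = false.
  by apply/eqP => h; move/eqP: n1; move/eqP: n2; lia.
have [e3|n3] := eqVneq i.+1 j.
  by rewrite ?add0r.
by rewrite !addr0.
Qed.

Lemma split_col (i j : nat) (X Y Z : R) :
  (if i == j then X else if i == j.+1 then Y else if i.+1 == j then Z else 0) =
  (if i == j then X else 0) + (if i == j.+1 then Y else 0)
  + (if i == j.-1 then (if (0 < j)%N then Z else 0) else 0).
Proof.
have [<-|n1] := eqVneq i j.
  have -> : (i == i.+1) = false by apply/eqP; lia.
  have -> : (i == i.-1) = (i == 0)%N by apply/eqP/eqP; lia.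
  case: i => [|i] //=; by rewrite !addr0.
have [e2|n2] := eqVneq i j.+1.
  have -> : (i == j.-1) = false by apply/eqP; lia.
  by rewrite add0r addr0.
have [e3|n3] := eqVneq i.+1 j.
  have -> : (i == j.-1) = true by apply/eqP; lia.
  have -> : (0 < j)%N = true by lia.
  by rewrite !add0r.
have -> : (i == j.-1) = false.
  by apply/eqP => h; move/eqP: n1; move/eqP: n3; lia.
by rewrite !addr0.
Qed.

Lemma tri_row n b a c (v : nat -> R) (i : 'I_n.+1) :
  \sum_j tri n b a c i j * v j =
  b i * v i + (if (0 < i)%N then a i.-1 * v i.-1 else 0)
  + (if (i < n)%N then c i.+1 * v i.+1 else 0).
Proof.
under eq_bigr => j _.
  rewrite mxE (split_row (val i) (val j) (b j) (a j) (c j)) !mulrDl.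
  rewrite !(fun_if (fun x => x * v j)) !mul0r.
  rewrite -[(if (0 < i)%N then _ else _)]/((fun k => if (0 < i)%N then a k * v k else 0) (val j)).
  over.
rewrite !big_split /=.
rewrite (sum_if_eq _ _ (fun k => b k * v k)) (ltn_ord i).
rewrite (sum_if_eq _ _ (fun k => if (0 < i)%N then a k * v k else 0)).
rewrite (sum_if_eq _ _ (fun k => c k * v k)).
have -> : (i.-1 < n.+1)%N = true by have := ltn_ord i; lia.
by rewrite ltnS.
Qed.

Lemma tri_col n b a c (w : nat -> R) (j : 'I_n.+1) :
  \sum_(i < n.+1) w i * tri n b a c i j =
  b j * w j + (if (j < n)%N then a j * w j.+1 else 0)
  + (if (0 < j)%N then c j * w j.-1 else 0).
Proof.
under eq_bigr => i _.
  rewrite mxE (split_col (val i) (val j) (b j) (a j) (c j)) !mulrDr.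
  rewrite !(fun_if (fun x => w i * x)) !mulr0.
  rewrite -[(if (0 < j)%N then _ else _)]/((fun k => if (0 < j)%N then w k * c j else 0) (val i)).
  rewrite -[w i * b j]/((fun k => w k * b j) (val i)).
  rewrite -[w i * a j]/((fun k => w k * a j) (val i)).
  over.
rewrite !big_split /=.
rewrite (sum_if_eq _ _ (fun k => w k * b j)) (ltn_ord j).
rewrite (sum_if_eq _ _ (fun k => w k * a j)) ltnS.
rewrite (sum_if_eq _ _ (fun k => if (0 < j)%N then w k * c j else 0)).
have -> : (j.-1 < n.+1)%N by have := ltn_ord j; lia.
rewrite mulrC; congr (_ + _ + _); first by case: ifP => //; rewrite mulrC.
by case: ifP => //; rewrite mulrC.
Qed.

End Tri.

Section Upper.
Variable R : realFieldType.

Lemma sum_pos_one (I : finType) (g : I -> R) (j : I) :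
  (forall i, 0 <= g i) -> 0 < g j -> 0 < \sum_i g i.
Proof.
move=> g0 gj; rewrite (bigD1 j) //=.
have : 0 <= \sum_(i | i != j) g i by apply: sumr_ge0.
lra.
Qed.

Lemma row_nz n (v : 'rV[R]_n) : v != 0 -> exists j, v 0 j != 0.
Proof.
move=> vn0; case: (pickP (fun j => v 0 j != 0)) => [j vj|h]; first by exists j.
suff : v = 0 by move=> e; rewrite e eqxx in vn0.
by apply/rowP => j; rewrite mxE; have := h j => /= /negbFE/eqP.
Qed.

Lemma eig_upper n (B : 'M[R]_n.+1) (u : 'I_n.+1 -> R) lam l :
  (forall i j, i != j -> 0 <= B i j) -> (forall i, 0 < u i) ->
  (forall i, \sum_j B i j * u j <= lam * u i) -> eigenvalue B l -> l <= lam.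
Proof.
move=> Boff upos Bu /eigenvalueP [v vB vn0].
have ev j : \sum_i v 0 i * B i j = l * v 0 j.
  by have := congr1 (fun M : 'M[R]_(1, n.+1) => M 0 j) vB; rewrite !mxE.
set c := \sum_i `|B i i|.
have cge i : `|B i i| <= c.
  rewrite /c (bigD1 i) //=.
  have : 0 <= \sum_(k | k != i) `|B k k| by apply: sumr_ge0.
  lra.
have nn i j : 0 <= B i j + (i == j)%:R * c.
  have [<-|ne] := eqVneq i j.
    have := cge i; have := ler_norm (- B i i); rewrite normrN mul1r; lra.
  by rewrite mul0r addr0 Boff.
have key j : `|l + c| * `|v 0 j| <= \sum_i `|v 0 i| * (B i j + (i == j)%:R * c).
  have e : (l + c) * v 0 j = \sum_i v 0 i * (B i j + (i == j)%:R * c).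
    under eq_bigr => i _ do rewrite mulrDr.
    rewrite big_split /= ev (bigD1 j) //= eqxx mul1r big1 ?addr0.
      by rewrite mulrDl (mulrC c).
    by move=> i /negbTE ->; rewrite mul0r mulr0.
  rewrite -normrM e.
  apply: le_trans (ler_norm_sum _ _ _) _.
  by apply: ler_sum => i _; rewrite normrM (ger0_norm (nn i j)).
have [j vj] := @row_nz _ v vn0.
set S := \sum_j `|v 0 j| * u j.
have Spos : 0 < S.
  apply: (@sum_pos_one _ _ j) => [i|].
    by rewrite mulr_ge0 // ltW.
  by rewrite mulr_gt0 // normr_gt0.
have h : `|l + c| * S <= (lam + c) * S.
  rewrite /S mulr_sumr.
  apply: (@le_trans _ _ (\sum_j (\sum_i `|v 0 i| * (B i j + (i == j)%:R * c)) * u j)).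
    apply: ler_sum => k _; rewrite mulrA; apply: ler_wpM2r; first exact: ltW.
    exact: key.
  under eq_bigr => k _ do rewrite mulr_suml.
  rewrite exchange_big /= mulr_sumr.
  apply: ler_sum => i _.
  under eq_bigr => k _ do rewrite -mulrA.
  rewrite -mulr_sumr mulrCA.
  apply: ler_wpM2l; first exact: normr_ge0.
  under eq_bigr => k _ do rewrite mulrDl.
  rewrite big_split /= [X in _ + X <= _](bigD1 i) //= eqxx mul1r [X in _ + (_ + X) <= _]big1 ?addr0.
    by rewrite mulrDl; have := Bu i; lra.
  by move=> k /negbTE; rewrite eq_sym => ->; rewrite !mul0r.
have : `|l + c| <= lam + c by rewrite -(ler_pM2r Spos).
have := ler_norm (l + c); lra.
Qed.

End Upper.

Section Near.
Variable R : realType.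

Lemma poly_near (p : {poly R}) a : 0 < p.[a] ->
  exists2 d, 0 < d & forall y, `|y - a| < d -> 0 < p.[y].
Proof.
move=> pa.
have := cvgr_gt _ (@continuous_horner _ p a) 0 pa.
move=> h; have [d /= d0 hd] := (nbhs_ballP a _).1 (h _).
exists d => // y yd; apply: hd.
by rewrite /ball /= distrC.
Qed.

End Near.

Section Near2.
Variable R : realType.

Lemma near_all (G : nat -> {poly R}) a m :
  (forall k, (k < m)%N -> 0 < (G k).[a]) ->
  exists2 d, 0 < d & forall y, `|y - a| < d -> forall k, (k < m)%N -> 0 < (G k).[y].
Proof.
elim: m => [|m IH] h.
  by exists 1 => // y _ k; rewrite ltn0.
have [d1 d10 h1] := IH (fun k km => h k (ltnW km)).
have [d2 d20 h2] := @poly_near _ _ _ (h m (ltnSn m)).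
exists (Num.min d1 d2); first by rewrite lt_min d10 d20.
move=> y; rewrite lt_min => /andP [y1 y2] k; rewrite ltnS leq_eqVlt => /orP [/eqP ->|km].
  exact: h2.
exact: h1.
Qed.

End Near2.

Lemma eig_tr (F : fieldType) n (B : 'M[F]_n) x : eigenvalue B^T x = eigenvalue B x.
Proof.
rewrite /eigenvalue /eigenspace !kermx_eq0 !row_free_unit -[in RHS]unitmx_tr.
by rewrite linearB /= tr_scalar_mx.
Qed.

Section Rec.
Variable R : realType.
Variables (n : nat) (b a c : nat -> R).
Hypothesis hn : (0 < n)%N.
Hypothesis ha : forall j, (j < n)%N -> 0 < a j.
Hypothesis hc : forall j, (0 < j)%N -> (j <= n)%N -> 0 < c j.

Fixpoint qpp (k : nat) : {poly R} * {poly R} :=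
  match k with
  | 0 => (0, 1)
  | k'.+1 => ((qpp k').2,
       (('X - (b k')%:P) * (qpp k').2 - a k'.-1 *: (qpp k').1) * ((c k'.+1)^-1)%:P)
  end.

Definition Qp k := (qpp k).2.
Definition Pp k := (qpp k).1.
Definition Fp k := ('X - (b k)%:P) * Qp k - a k.-1 *: Pp k.

Lemma Qp0 x : (Qp 0).[x] = 1. Proof. by rewrite /Qp /= hornerC. Qed.
Lemma Pp0 x : (Pp 0).[x] = 0. Proof. by rewrite /Pp /= horner0. Qed.
Lemma PpS k : Pp k.+1 = Qp k. Proof. by []. Qed.
Lemma QpS x k : (Qp k.+1).[x] = (Fp k).[x] / c k.+1.
Proof. by rewrite /Qp /= hornerM hornerC. Qed.
Lemma FpE x k : (Fp k).[x] = (x - b k) * (Qp k).[x] - a k.-1 * (Pp k).[x].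
Proof. by rewrite /Fp !hornerE. Qed.

Lemma row_q x (i : 'I_n.+1) :
  \sum_j tri n b a c i j * (Qp j).[x] =
  x * (Qp i).[x] - (if (i : nat) == n then (Fp n).[x] else 0).
Proof.
rewrite (tri_row b a c (fun k => (Qp k).[x]) i).
have hPi : (if (0 < i)%N then a i.-1 * (Qp i.-1).[x] else 0) = a i.-1 * (Pp i).[x].
  case: (nat_of_ord i) => [|k]; first by rewrite Pp0 mulr0.
  by rewrite PpS.
rewrite hPi.
have [e|ne] := eqVneq (i : nat) n.
  have -> : (i < n)%N = false by lia.
  by rewrite e FpE; ring.
have lt : (i < n)%N by have := ltn_ord i; move/eqP: ne; lia.
rewrite lt QpS mulrCA mulfV ?mulr1; last first.
  by apply: lt0r_neq0; apply: hc; lia.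
rewrite FpE; ring.
Qed.

Definition pos x := (forall k, (k <= n)%N -> 0 < (Qp k).[x]) /\ 0 < (Fp n).[x].


Lemma le_sum_nat (m : nat) (g : nat -> R) i : (forall j, 0 <= g j) -> (i < m)%N ->
  g i <= \sum_(j < m) g j.
Proof.
move=> g0 im; rewrite (bigD1 (Ordinal im)) //=.
have : 0 <= \sum_(j < m | j != Ordinal im) g j by apply: sumr_ge0.
lra.
Qed.

Lemma pos_large : exists X, forall y, X <= y -> pos y.
Proof.
set S := \sum_(j < n.+2) (`|a j| + `|b j| + `|c j|).
have hS j : (j < n.+2)%N -> [/\ `|a j| <= S, `|b j| <= S & `|c j| <= S].
  move=> jn; have := @le_sum_nat n.+2 (fun j => `|a j| + `|b j| + `|c j|) j.
  have := normr_ge0 (a j); have := normr_ge0 (b j); have := normr_ge0 (c j).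
  move=> h1 h2 h3 /(_ _ jn) h; rewrite /S; split; last first.
  - apply: le_trans (h _); first lra.
    by move=> k; rewrite !addr_ge0.
  - apply: le_trans (h _); first lra.
    by move=> k; rewrite !addr_ge0.
  - apply: le_trans (h _); first lra.
    by move=> k; rewrite !addr_ge0.
have S0 : 0 <= S by rewrite sumr_ge0 // => k _; rewrite !addr_ge0.
exists (3 * S + 1) => y hy.
have inv k : (k <= n)%N -> 0 < (Qp k).[y] /\ 0 <= (Pp k).[y] <= (Qp k).[y].
  elim: k => [_|k IH kn].
    rewrite Qp0 Pp0; split; first lra.
    by rewrite lexx ler01.
  have [q0 /andP [p0 pq]] := IH (ltnW kn).
  rewrite PpS QpS FpE.
  have ck : 0 < c k.+1 by apply: hc; lia.
  have ak : 0 < a k.-1 by apply: ha; lia.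
  have [_ hb _] := hS k ltac:(lia).
  have [hak _ _] := hS k.-1 ltac:(lia).
  have [_ _ hck] := hS k.+1 ltac:(lia).
  have e1 := ler_norm (b k); have e2 := ler_norm (a k.-1); have e3 := ler_norm (c k.+1).
  have h1 : a k.-1 * (Pp k).[y] <= a k.-1 * (Qp k).[y] by rewrite ler_wpM2l // ltW.
  have h2 : 0 <= (y - b k - a k.-1 - c k.+1) * (Qp k).[y].
    by rewrite mulr_ge0 // ?ltW //; lra.
  have h3 : c k.+1 * (Qp k).[y] <= (y - b k) * (Qp k).[y] - a k.-1 * (Pp k).[y].
    move: h2; rewrite !mulrBl; lra.
  split.
    by apply: divr_gt0 => //; have := mulr_gt0 ck q0; lra.
  rewrite ltW //=; rewrite ler_pdivlMr // mulrC //.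
have [qn /andP [pn pqn]] := inv n (leqnn n).
split; first by move=> k kn; case: (inv k kn).
rewrite FpE.
have ak : 0 < a n.-1 by apply: ha; lia.
have [_ hb _] := hS n ltac:(lia).
have [hak _ _] := hS n.-1 ltac:(lia).
have e1 := ler_norm (b n); have e2 := ler_norm (a n.-1).
have h1 : a n.-1 * (Pp n).[y] <= a n.-1 * (Qp n).[y] by rewrite ler_wpM2l // ltW.
have h2 : 0 < (y - b n - a n.-1) * (Qp n).[y].
  by rewrite mulr_gt0 //; lra.
move: h2; rewrite !mulrBl; lra.
Qed.

Lemma pos_test x lam (w : nat -> R) (j0 : 'I_n.+1) : pos x ->
  (forall j : 'I_n.+1, 0 <= w j) -> 0 < w j0 ->
  (forall j : 'I_n.+1, lam * w j <= \sum_(i < n.+1) w i * tri n b a c i j) -> lam <= x.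
Proof.
move=> [qp Fp0] w0 wj0 hw.
have qpos (j : 'I_n.+1) : 0 < (Qp j).[x] by apply: qp; have := ltn_ord j; lia.
set S := \sum_(j < n.+1) w j * (Qp j).[x].
have Spos : 0 < S.
  apply: (@sum_pos_one _ _ _ j0) => [i|]; first by rewrite mulr_ge0 // ltW.
  by rewrite mulr_gt0.
have h1 : \sum_(i < n.+1) w i * (\sum_j tri n b a c i j * (Qp j).[x]) <= x * S.
  rewrite /S mulr_sumr; apply: ler_sum => i _; rewrite row_q.
  rewrite mulrBr mulrCA; have : 0 <= w i * (if (i : nat) == n then (Fp n).[x] else 0).
    by case: ifP => _; rewrite mulr_ge0 // ?ltW.
  lra.
have h2 : lam * S <= \sum_(j < n.+1) (\sum_(i < n.+1) w i * tri n b a c i j) * (Qp j).[x].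
  rewrite /S mulr_sumr; apply: ler_sum => j _; rewrite mulrA.
  by apply: ler_wpM2r; [apply: ltW|apply: hw].
have e : \sum_(i < n.+1) w i * (\sum_j tri n b a c i j * (Qp j).[x]) =
         \sum_(j < n.+1) (\sum_(i < n.+1) w i * tri n b a c i j) * (Qp j).[x].
  under eq_bigr => i _ do rewrite mulr_sumr.
  rewrite exchange_big /=; apply: eq_bigr => j _.
  by rewrite mulr_suml; apply: eq_bigr => i _; rewrite mulrA.
have : lam * S <= x * S by rewrite -e in h2; apply: le_trans h2 h1.
by rewrite ler_pM2r.
Qed.


Lemma exists_root x1 : ~ pos x1 -> exists2 l, x1 <= l & (Fp n).[l] = 0.
Proof.
move=> npos.
have [X hX] := pos_large.
set T := [set x | x1 <= x /\ ~ pos x].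
have Tx1 : T x1 by split.
have Tub : forall t, T t -> t <= X.
  move=> t [_ nt]; rewrite leNgt; apply/negP => Xt; apply: nt; apply: hX; exact: ltW.
have hsup : has_sup T by split; [exists x1 | exists X => t Tt; exact: Tub].
set xs := sup T.
have hx1 : x1 <= xs by apply: sup_upper_bound.
have hgt : forall y, xs < y -> pos y.
  move=> y xy; apply: contrapT => ny.
  have Ty : T y by split => //; apply: le_trans hx1 (ltW xy).
  have := sup_upper_bound hsup Ty; rewrite -/xs => h.
  by move: xy; rewrite ltNge h.
have nonneg : forall p : {poly R}, (forall y, xs < y -> 0 < p.[y]) -> 0 <= p.[xs].
  move=> p hp; rewrite leNgt; apply/negP => pneg.
  have : 0 < (- p).[xs] by rewrite hornerN oppr_gt0.
  move=> /poly_near [d d0 hd].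
  have h1 : `|xs + d / 2 - xs| < d.
    have -> : xs + d / 2 - xs = d / 2 by ring.
    rewrite ger0_norm; lra.
  have := hd _ h1; rewrite hornerN oppr_gt0.
  have := hp (xs + d / 2) ltac:(lra).
  lra.
have qnn k : (k <= n)%N -> 0 <= (Qp k).[xs].
  by move=> kn; apply: nonneg => y /hgt [h _]; exact: h k kn.
have Fnn : 0 <= (Fp n).[xs].
  by apply: nonneg => y /hgt [_ h].
have qpos k : (k <= n)%N -> 0 < (Qp k).[xs].
  elim: k => [_|k IH kn]; first by rewrite Qp0 ltr01.
  have qk := IH (ltnW kn).
  rewrite lt_neqAle qnn // andbT; apply/eqP => q0.
  have hF : (Fp k.+1).[xs] < 0.
    rewrite FpE -q0 mulr0 PpS sub0r oppr_lt0 /=; apply: mulr_gt0 => //; apply: ha; lia.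
  have [lt|e] : (k.+1 < n)%N \/ k.+1 = n by lia.
    have := qnn k.+2 lt; rewrite QpS.
    have ck : 0 < c k.+2 by apply: hc; lia.
    have : (Fp k.+1).[xs] / c k.+2 < 0 by rewrite pmulr_llt0 ?invr_gt0.
    lra.
  by move: hF; rewrite e; lra.
have Fz : (Fp n).[xs] = 0.
  apply/eqP; rewrite eq_le Fnn andbT leNgt; apply/negP => Fpos.
  pose G k := if (k <= n)%N then Qp k else Fp n.
  have hG : forall k, (k < n.+2)%N -> 0 < (G k).[xs].
    move=> k kn; rewrite /G; case: ifP => kn'; [exact: qpos | done].
  have [d d0 hd] := near_all hG.
  have [t Tt td] := sup_adherent d0 hsup.
  have txs : t <= xs := sup_upper_bound hsup Tt.
  have htd : `|t - xs| < d.
    rewrite distrC ger0_norm ?subr_ge0 //; rewrite -/xs in td; lra.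
  case: Tt => _; apply; split.
    move=> k kn; have := hd t htd k ltac:(lia); rewrite /G kn; exact.
  by have := hd t htd n.+1 ltac:(lia); rewrite /G ltnn.
by exists xs.
Qed.

Lemma eig_of_root l : (Fp n).[l] = 0 -> eigenvalue (tri n b a c) l.
Proof.
move=> Fz.
pose v : 'cV[R]_n.+1 := \col_i (Qp i).[l].
have hv : tri n b a c *m v = l *: v.
  apply/colP => i; rewrite [LHS]mxE [RHS]mxE [v i 0]mxE.
  under eq_bigr => j _ do rewrite [v j 0]mxE.
  by rewrite row_q; case: ifP => _; rewrite ?Fz subr0.
rewrite -eig_tr; apply/eigenvalueP; exists v^T.
  by rewrite -trmx_mul hv linearZ.
apply/eqP => h; have := congr1 (fun M : 'rV[R]_n.+1 => M 0 0) h.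
rewrite !mxE Qp0; apply/eqP; exact: oner_neq0.
Qed.

End Rec.

Section Spec.
Variable R : realType.
Variables (A : nat) (mu : R).

Definition bS (j : nat) : R := (if j == A then (NN A)%:R else 0) - mu * (NN A)%:R.
Definition aS (j : nat) : R := mu * ((NN A)%:R - j%:R).
Definition cS (j : nat) : R := mu * j%:R.

Lemma B_tri : Mmat R A + mu *: Qmat R (NN A) = tri (NN A) bS aS cS.
Proof.
apply/matrixP => i j; rewrite !mxE /bS /aS /cS.
have jN : (j <= NN A)%N by have := ltn_ord j; lia.
have [e|ne] := eqVneq (val i) (val j).
  have -> : i = j by apply: val_inj.
  by rewrite eqxx mulr1n mulrN.
have -> : (i == j) = false by apply/eqP => h; rewrite h eqxx in ne.
rewrite mulr0n add0r.
case: ifP => _; first by rewrite natrB.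
by case: ifP => _; rewrite ?mulr0.
Qed.

End Spec.

Section Bounds.
Variable R : realType.
Variables (A : nat) (mu e : R).
Hypothesis hA : (0 < A)%N.
Hypothesis hmu : 0 < mu.
Hypothesis he : 0 < e.
Hypothesis rel : mu * e ^+ 2 + 2 * e - mu = 0.

Definition E (k : nat) : R := e ^+ ((k - A) + (A - k))%N.
Definition sS : R := 1 - mu + mu * e.

Lemma E_gt0 k : 0 < E k. Proof. by rewrite /E exprn_gt0. Qed.

Lemma upper_row (i : 'I_(NN A).+1) :
  \sum_j tri (NN A) (bS A mu) (aS A mu) (cS mu) i j * E j
   <= ((NN A)%:R * sS + 2 * mu * e) * E i.
Proof.
rewrite (tri_row (bS A mu) (aS A mu) (cS mu) E i).
move: (nat_of_ord i) (ltn_ord i) => k kN.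
have hN : (NN A)%:R = 2 * A%:R :> R by rewrite /NN natrM.
rewrite /bS /aS /cS hN /sS.
have mu0 := ltW hmu; have e0 := ltW he.
case: (ltngtP k A) => [lt|gt|eq].
- have [d hd] : exists d, A = (k + d.+1)%N by exists (A - k.+1)%N; lia.
  have Ek : E k = e * e ^+ d.
    by rewrite /E (_ : (k - A + (A - k))%N = d.+1) ?exprS //; lia.
  have Ek1 : E k.+1 = e ^+ d by rewrite /E (_ : (k.+1 - A + (A - k.+1))%N = d) //; lia.
  have kN' : (k < NN A)%N by rewrite /NN; lia.
  rewrite kN' Ek Ek1 -[k.+1%:R]natr1 sub0r.
  set K := e ^+ d.
  have K0 : 0 < K by rewrite exprn_gt0.
  have t1 : (if (0 < k)%N then mu * (2 * A%:R - (k.-1)%:R) * E k.-1 else 0)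
      <= mu * (2 * A%:R - k%:R + 1) * (e * (e * K)).
    case: ifP => k0.
      have Ekm : E k.-1 = e * (e * K).
        by rewrite /E (_ : (k.-1 - A + (A - k.-1))%N = d.+2) ?exprS //; lia.
      have hkm : (k.-1)%:R = k%:R - 1 :> R.
        by rewrite -[in RHS](prednK k0) -natr1; ring.
      by rewrite Ekm hkm le_eqVlt; apply/orP; left; apply/eqP; ring.
    rewrite !mulr_ge0 //; last by rewrite ltW.
    have : (k%:R <= A%:R :> R) by rewrite ler_nat; lia.
    have : (0 <= A%:R :> R) by [].
    lra.
  have hk : k%:R + 1 <= A%:R :> R by rewrite natr1 ler_nat; lia.
  have key : (2 * A%:R * (1 - mu + mu * e) + 2 * mu * e) * (e * K) -
     (- (mu * (2 * A%:R)) * (e * K) + mu * (2 * A%:R - k%:R + 1) * (e * (e * K)) +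
      mu * (k%:R + 1) * K) =
     K * e * (2 * A%:R - 2 * k%:R - 2) + K * (k%:R + 1) * (mu * e ^+ 2 + 2 * e - mu).
    by ring.
  rewrite rel mulr0 addr0 in key.
  have : 0 <= K * e * (2 * A%:R - 2 * k%:R - 2).
    apply: mulr_ge0; first by rewrite mulr_ge0 // ltW.
    lra.
  set X := (if (0 < k)%N then _ else _) in t1 *; clearbody K X; lra.
- have [d hd] : exists d, k = (A + d.+1)%N by exists (k - A.+1)%N; lia.
  have Ek : E k = e * e ^+ d.
    by rewrite /E (_ : (k - A + (A - k))%N = d.+1) ?exprS //; lia.
  have Ekm : E k.-1 = e ^+ d by rewrite /E (_ : (k.-1 - A + (A - k.-1))%N = d) //; lia.
  have k0 : (0 < k)%N by lia.
  have hkm : (k.-1)%:R = k%:R - 1 :> R.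
    by rewrite -[in RHS](prednK k0) -natr1; ring.
  rewrite k0 Ek Ekm hkm sub0r.
  set K := e ^+ d.
  have K0 : 0 < K by rewrite exprn_gt0.
  have t1 : (if (k < NN A)%N then mu * k.+1%:R * E k.+1 else 0)
      <= mu * (k%:R + 1) * (e * (e * K)).
    case: ifP => kN'.
      have Ekp : E k.+1 = e * (e * K).
        by rewrite /E (_ : (k.+1 - A + (A - k.+1))%N = d.+2) ?exprS //; lia.
      by rewrite Ekp -natr1 le_eqVlt; apply/orP; left; apply/eqP; ring.
    apply: mulr_ge0; last by rewrite !mulr_ge0 // ltW.
    by apply: mulr_ge0 => //; rewrite addr_ge0.
  have hk : A%:R + 1 <= k%:R :> R by rewrite natr1 ler_nat; lia.
  have key : (2 * A%:R * (1 - mu + mu * e) + 2 * mu * e) * (e * K) -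
     (- (mu * (2 * A%:R)) * (e * K) + mu * (2 * A%:R - (k%:R - 1)) * K +
      mu * (k%:R + 1) * (e * (e * K))) =
     K * e * (2 * k%:R - 2 * A%:R - 2) + K * (2 * A%:R - k%:R + 1) * (mu * e ^+ 2 + 2 * e - mu).
    by ring.
  rewrite rel mulr0 addr0 in key.
  have : 0 <= K * e * (2 * k%:R - 2 * A%:R - 2).
    apply: mulr_ge0; first by rewrite mulr_ge0 // ltW.
    lra.
  set X := (if (k < NN A)%N then _ else _) in t1 *; clearbody K X; lra.
- subst k.
  have EA : E A = 1 by rewrite /E subnn expr0.
  have EAm : E A.-1 = e by rewrite /E (_ : (A.-1 - A + (A - A.-1))%N = 1) ?expr1 //; lia.
  have EAp : E A.+1 = e by rewrite /E (_ : (A.+1 - A + (A - A.+1))%N = 1) ?expr1 //; lia.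
  have AN : (A < NN A)%N by rewrite /NN; lia.
  have hkm : (A.-1)%:R = A%:R - 1 :> R.
    by rewrite -[in RHS](prednK hA) -natr1; ring.
  rewrite hA AN EA EAm EAp hkm -natr1.
  by rewrite le_eqVlt; apply/orP; left; apply/eqP; ring.
Qed.

Lemma lower_col (j : 'I_(NN A).+1) :
  (NN A)%:R * sS * E j <=
  \sum_(i < (NN A).+1) E i * tri (NN A) (bS A mu) (aS A mu) (cS mu) i j.
Proof.
rewrite (tri_col (bS A mu) (aS A mu) (cS mu) E j).
move: (nat_of_ord j) (ltn_ord j) => k kN.
have hN : (NN A)%:R = 2 * A%:R :> R by rewrite /NN natrM.
rewrite /bS /aS /cS hN /sS.
have mu0 := ltW hmu; have e0 := ltW he.
case: (ltngtP k A) => [lt|gt|eq].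
- have [d hd] : exists d, A = (k + d.+1)%N by exists (A - k.+1)%N; lia.
  have Ek : E k = e * e ^+ d.
    by rewrite /E (_ : (k - A + (A - k))%N = d.+1) ?exprS //; lia.
  have Ek1 : E k.+1 = e ^+ d by rewrite /E (_ : (k.+1 - A + (A - k.+1))%N = d) //; lia.
  have kN' : (k < NN A)%N by rewrite /NN; lia.
  rewrite kN' Ek Ek1 sub0r.
  set K := e ^+ d.
  have K0 : 0 < K by rewrite exprn_gt0.
  have t1 : (if (0 < k)%N then mu * k%:R * E k.-1 else 0) = mu * k%:R * (e * (e * K)).
    case: ifP => k0.
      by rewrite /E (_ : (k.-1 - A + (A - k.-1))%N = d.+2) ?exprS //; lia.
    have k00 : k = 0%N by lia.
    by rewrite k00 mulr0 mul0r.
  rewrite t1.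
  have hk : k%:R + 1 <= A%:R :> R by rewrite natr1 ler_nat; lia.
  have key : (- (mu * (2 * A%:R)) * (e * K) + mu * (2 * A%:R - k%:R) * K +
      mu * k%:R * (e * (e * K))) - 2 * A%:R * (1 - mu + mu * e) * (e * K) =
     K * e * (2 * A%:R - 2 * k%:R) - K * (2 * A%:R - k%:R) * (mu * e ^+ 2 + 2 * e - mu).
    by ring.
  rewrite rel mulr0 subr0 in key.
  have : 0 <= K * e * (2 * A%:R - 2 * k%:R).
    apply: mulr_ge0; first by rewrite mulr_ge0 // ltW.
    lra.
  clearbody K; lra.
- have [d hd] : exists d, k = (A + d.+1)%N by exists (k - A.+1)%N; lia.
  have Ek : E k = e * e ^+ d.
    by rewrite /E (_ : (k - A + (A - k))%N = d.+1) ?exprS //; lia.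
  have Ekm : E k.-1 = e ^+ d by rewrite /E (_ : (k.-1 - A + (A - k.-1))%N = d) //; lia.
  have k0 : (0 < k)%N by lia.
  rewrite k0 Ek Ekm sub0r.
  set K := e ^+ d.
  have K0 : 0 < K by rewrite exprn_gt0.
  have t1 : (if (k < NN A)%N then mu * (2 * A%:R - k%:R) * E k.+1 else 0)
      = mu * (2 * A%:R - k%:R) * (e * (e * K)).
    case: ifP => kN'.
      by rewrite /E (_ : (k.+1 - A + (A - k.+1))%N = d.+2) ?exprS //; lia.
    have -> : k = NN A by lia.
    by rewrite hN subrr mulr0 mul0r.
  rewrite t1.
  have hk : A%:R + 1 <= k%:R :> R by rewrite natr1 ler_nat; lia.
  have key : (- (mu * (2 * A%:R)) * (e * K) + mu * (2 * A%:R - k%:R) * (e * (e * K)) +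
      mu * k%:R * K) - 2 * A%:R * (1 - mu + mu * e) * (e * K) =
     K * e * (2 * k%:R - 2 * A%:R) - K * k%:R * (mu * e ^+ 2 + 2 * e - mu).
    by ring.
  rewrite rel mulr0 subr0 in key.
  have : 0 <= K * e * (2 * k%:R - 2 * A%:R).
    apply: mulr_ge0; first by rewrite mulr_ge0 // ltW.
    lra.
  clearbody K; lra.
- subst k.
  have EA : E A = 1 by rewrite /E subnn expr0.
  have EAm : E A.-1 = e by rewrite /E (_ : (A.-1 - A + (A - A.-1))%N = 1) ?expr1 //; lia.
  have EAp : E A.+1 = e by rewrite /E (_ : (A.+1 - A + (A - A.+1))%N = 1) ?expr1 //; lia.
  have AN : (A < NN A)%N by rewrite /NN; lia.
  rewrite hA AN EA EAm EAp.
  by rewrite le_eqVlt; apply/orP; left; apply/eqP; ring.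
Qed.


End Bounds.

Section Final.
Variable R : realType.

Lemma tri_off (A : nat) (mu : R) : 0 <= mu ->
  forall i j : 'I_(NN A).+1, i != j -> 0 <= tri (NN A) (bS A mu) (aS A mu) (cS mu) i j.
Proof.
move=> mu0 i j ne; rewrite mxE.
have -> : (val i == val j) = false.
  by apply/eqP => h; move: ne; rewrite (val_inj h) eqxx.
case: ifP => _.
  by rewrite /aS mulr_ge0 // subr_ge0 ler_nat; exact: ltn_ord j.
by case: ifP => _ //; rewrite /cS mulr_ge0.
Qed.

Definition eS (mu : R) := (Num.sqrt (mu ^+ 2 + 1) - 1) / mu.

Lemma mbar_pos (A : nat) (mu : R) (hA : (0 < A)%N) (hmu : 0 < mu) :
  (NN A)%:R * (Num.sqrt (mu ^+ 2 + 1) - mu) - 1 <= mbar A mu <=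
  (NN A)%:R * (Num.sqrt (mu ^+ 2 + 1) - mu) + 2 * mu * eS mu.
Proof.
set e := eS mu.
set t := Num.sqrt (mu ^+ 2 + 1).
have t0 : 0 <= t := sqrtr_ge0 _.
have tt : t ^+ 2 = mu ^+ 2 + 1 by rewrite sqr_sqrtr // addr_ge0 // sqr_ge0.
have mu0 : mu != 0 by rewrite gt_eqF.
have t1 : 1 < t by nra.
have me : mu * e = t - 1 by rewrite /e /eS mulrC divfK.
have he : 0 < e by rewrite /e /eS divr_gt0 // subr_gt0.
have rel : mu * e ^+ 2 + 2 * e - mu = 0.
  apply: (mulIf mu0); rewrite mul0r.
  have -> : (mu * e ^+ 2 + 2 * e - mu) * mu = (mu * e) ^+ 2 + 2 * (mu * e) - mu ^+ 2 by ring.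
  by rewrite me; nra.
have hs : sS mu e = t - mu by rewrite /sS me; ring.
rewrite -hs.
rewrite /mbar /dominant_eigenvalue B_tri.
set S := [set l | _].
set lam := (NN A)%:R * sS mu e + 2 * mu * e.
have hn : (0 < NN A)%N by rewrite /NN; lia.
have ha : forall j, (j < NN A)%N -> 0 < aS A mu j.
  by move=> j jn; rewrite /aS mulr_gt0 // subr_gt0 ltr_nat.
have hc : forall j, (0 < j)%N -> (j <= NN A)%N -> 0 < cS mu j.
  by move=> j j0 _; rewrite /cS mulr_gt0 // ltr0n.
have ub : ubound S lam.
  move=> l; rewrite /S /= => hl.
  apply: (@eig_upper _ _ _ (fun i : 'I_(NN A).+1 => E A e i) lam l (tri_off (ltW hmu)) _ _ hl) => [i|i].
    exact: E_gt0.
  exact: (upper_row hA hmu he rel i).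
set x1 := (NN A)%:R * sS mu e - 1.
have npos : ~ pos (NN A) (bS A mu) (aS A mu) (cS mu) x1.
  move=> hp.
  have := pos_test hn hc (j0 := ord0) hp (fun j => ltW (E_gt0 A he j)) (E_gt0 A he _)
     (lower_col hA hmu he rel).
  rewrite /x1; lra.
have [l hl Fz] := exists_root hn ha hc npos.
have Sl : S l by exact: (eig_of_root hn hc Fz).
have hsup : has_sup S by split; [exists l | exists lam].
apply/andP; split.
  apply: le_trans hl _; exact: sup_upper_bound hsup _ Sl.
by apply: ge_sup => //; exists l.
Qed.


Lemma mbar_zero (A : nat) (hA : (0 < A)%N) : mbar A (0:R) = (NN A)%:R.
Proof.
rewrite /mbar /dominant_eigenvalue B_tri.
set S := [set l | _].
have ub : ubound S (NN A)%:R.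
  move=> l hl.
  apply: (@eig_upper _ _ _ (fun _ => 1) _ l (tri_off (lexx 0)) _ _ hl) => [i|i].
    exact: ltr01.
  rewrite (tri_row _ _ _ (fun _ => 1) i) /bS /aS /cS !mul0r !mulr1 subr0 !if_same !addr0.
  by case: ifP => _ //; rewrite ler0n.
have AN : (A < (NN A).+1)%N by rewrite /NN; lia.
have SN : S (NN A)%:R.
  rewrite /S /=; apply/eigenvalueP.
  exists (\row_j (if (j : nat) == A then 1 else 0) : 'rV[R]_(NN A).+1).
    apply/rowP => j; rewrite [LHS]mxE [RHS]mxE [X in _ = _ * X]mxE.
    under eq_bigr => i _ do rewrite [X in X * _]mxE.
    rewrite (tri_col _ _ _ (fun k => if k == A then 1 else 0) j).
    rewrite /bS /aS /cS !mul0r !if_same !addr0 subr0.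
    by case: ifP => _; rewrite ?mulr0 ?mulr1.
  apply/eqP => h; have := congr1 (fun M : 'rV[R]_(NN A).+1 => M 0 (Ordinal AN)) h.
  by rewrite !mxE /= eqxx; apply/eqP; exact: oner_neq0.
apply/eqP; rewrite eq_le; apply/andP; split.
  by apply: ge_sup => //; exists (NN A)%:R.
by apply: sup_upper_bound => //; split; [exists (NN A)%:R | exists (NN A)%:R].
Qed.

End Final.

Unset Implicit Arguments.

Theorem proposition3 (R : realType) (mu : R) (hmu : 0 <= mu) :
  (fun A : nat => rbar A.+1 mu) @ \oo --> Num.sqrt (mu ^+ 2 + 1) - mu.
Proof.
have hN n : 0 < ((NN n.+1)%:R : R) by rewrite ltr0n /NN; lia.
have [->|mu0] := eqVneq mu 0.
  have -> : (fun A : nat => rbar A.+1 (0:R)) = fun _ => 1.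
    apply/funext => A; rewrite /rbar mbar_zero // divff //.
    exact: lt0r_neq0.
  rewrite expr0n /= add0r sqrtr1 subr0; exact: cvg_cst.
have mupos : 0 < mu by rewrite lt_neqAle eq_sym mu0.
set s := Num.sqrt (mu ^+ 2 + 1) - mu.
set K := 2 * mu * eS mu.
have hh : (fun n : nat => ((NN n.+1)%:R : R)^-1) @ \oo --> (0:R).
  have -> : (fun n : nat => ((NN n.+1)%:R : R)^-1) = (fun n => 2^-1 * harmonic n).
    by apply/funext => n; rewrite /NN natrM invfM.
  rewrite -(mulr0 (2^-1 : R)); apply: cvgM; [exact: cvg_cst | exact: cvg_harmonic].
have hf : (fun n : nat => s - ((NN n.+1)%:R : R)^-1) @ \oo --> s.
  rewrite -[X in _ --> X](subr0 s); apply: cvgB; [exact: cvg_cst | exact: hh].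
have hg : (fun n : nat => s + K * ((NN n.+1)%:R : R)^-1) @ \oo --> s.
  rewrite -[X in _ --> X](addr0 s) -[X in s + X](mulr0 K).
  apply: cvgD; [exact: cvg_cst | apply: cvgM; [exact: cvg_cst | exact: hh]].
apply: (squeeze_cvgr _ hf hg).
apply: nearW => n.
have /andP [h1 h2] := mbar_pos (A := n.+1) erefl mupos.
rewrite /rbar.
set N := ((NN n.+1)%:R : R) in h1 h2 *.
set m := mbar n.+1 mu in h1 h2 *.
have Np := hN n; rewrite -/N in Np.
have iN : 0 < N^-1 by rewrite invr_gt0.
have h1' := ler_wpM2r (ltW iN) h1.
have h2' := ler_wpM2r (ltW iN) h2.
have e1 : (N * s - 1) * N^-1 = s - N^-1 by field; exact: lt0r_neq0.
have e2 : (N * s + K) * N^-1 = s + K * N^-1 by field; exact: lt0r_neq0.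
rewrite e1 in h1'; rewrite e2 in h2'.
by apply/andP; split.
Qed.
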